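(* Let $R$ be a Noetherian Banach–Tate $\mathbb{Z}_p$-algebra with norm $|\cdot|$ and multiplicative pseudo-uniformizer $\varpi$, and let $\kappa:T_0\to R^\times$ be a continuous character. Then there exists a norm $|\cdot|'$ on $R$ making $R$ a Banach–Tate $\mathbb{Z}_p$-algebra, bounded-equivalent to $|\cdot|^s$ for some real $s>0$, such that $|\kappa(t)|'\le1$ for all $t\in T_0$, $|\kappa(t)-1|'<1$ for all $t\in T_\epsilon$, and $\varpi$ is a multiplicative pseudo-uniformizer for $|\cdot|'$.
   Context: $p$ prime, $\epsilon=1$ if $p\neq2$ and $\epsilon=2$ if $p=2$. $T_0=\mathbf{T}(\mathbb{Z}_p)$ where $\mathbf{T}=\prod_{v\mid p}\mathrm{Res}_{\mathcal{O}_{F_v}/\mathbb{Z}_p}\mathbf{T}_v$ for split tori $\mathbf{T}_v$ over $\mathcal{O}_{F_v}$ ($F$ a number field), and $T_\epsilon=\ker(T_0\to\mathbf{T}(\mathbb{Z}/p^\epsilon))$. Norms are non-archimedean, submultiplicative, $|1|=1$. A Banach–Tate $\mathbb{Z}_p$-algebra is a complete normed ring with a unit $\varpi$, $|\varpi|<1$, $|\varpi s|=|\varpi||s|$ for all $s$ (multiplicative pseudo-uniformizer), and a ring map $\mathbb{Z}_p\to R$ with $|x|\le|x|_p$. Norms $|\cdot|_1,|\cdot|_2$ are bounded-equivalent if $C_1|r|_1\le|r|_2\le C_2|r|_1$ for constants $C_1,C_2>0$. *)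

(* Defs.v *)
From HB Require Import structures.
From mathcomp Require Import all_boot all_order all_algebra.
From Stdlib Require Rdefinitions.
From mathcomp Require Import boolp classical_sets reals Rstruct exp.

Set Implicit Arguments.
Unset Strict Implicit.
Unset Printing Implicit Defensive.
Import Order.TTheory GRing.Theory Num.Theory.
Local Open Scope ring_scope.

(* The ring Z_p of p-adic integers, as the inverse limit of Z/p^n Z:         *)
(* an element is a sequence x with x n in [0, p^n) the residue mod p^n,      *)
(* and x (n+1) mod p^n = x n.                                                *)

Definition zmodn (p n : nat) : int := ((p ^ n)%N)%:Z.

Definition zp_coh (p : nat) (x : nat -> int) :=
  forall n, (x n.+1 %% zmodn p n)%Z = x n.

Record Zpadic (p : nat) := MkZp { zp_seq : nat -> int ; zp_cohP : zp_coh p zp_seq }.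

HB.instance Definition _ (p : nat) := gen_eqMixin (Zpadic p).
HB.instance Definition _ (p : nat) := gen_choiceMixin (Zpadic p).

Lemma zp_inj (p : nat) (x y : Zpadic p) : zp_seq x = zp_seq y -> x = y.
Proof.
case: x => fx hx; case: y => fy hy /= e; subst fy.
by rewrite (Prop_irrelevance hx hy).
Qed.

Lemma zp_red (p : nat) (x : Zpadic p) n : (zp_seq x n %% zmodn p n)%Z = zp_seq x n.
Proof. by rewrite -(zp_cohP x n) modz_mod. Qed.

Lemma modz_dvdm (m d1 d2 : int) :
  (d1 %| d2)%Z -> ((m %% d2)%Z %% d1)%Z = (m %% d1)%Z.
Proof.
move=> /dvdzP [k ->].
by rewrite [in RHS](intdiv.divz_eq m (k * d1)) mulrA modzMDl.
Qed.

Lemma zmodn_dvd (p n : nat) : (zmodn p n %| zmodn p n.+1)%Z.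
Proof. by rewrite /zmodn dvdzE /= expnS dvdn_mull. Qed.

Definition zp_wcoh (p : nat) (f : nat -> int) :=
  forall n, (f n.+1 %% zmodn p n)%Z = (f n %% zmodn p n)%Z.

Lemma zp_norm_coh (p : nat) (f : nat -> int) :
  zp_wcoh p f -> zp_coh p (fun n => (f n %% zmodn p n)%Z).
Proof. by move=> H n; rewrite modz_dvdm ?zmodn_dvd // H. Qed.

Lemma zp_coh_wcoh (p : nat) (x : Zpadic p) : zp_wcoh p (zp_seq x).
Proof. by move=> n; rewrite zp_cohP zp_red. Qed.

Definition zp_mk (p : nat) (f : nat -> int) (H : zp_wcoh p f) : Zpadic p :=
  @MkZp p (fun n => (f n %% zmodn p n)%Z) (zp_norm_coh H).

Lemma zp_wcoh_cst (p : nat) (c : int) : zp_wcoh p (fun _ => c).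
Proof. by []. Qed.

Lemma zp_wcohD (p : nat) (f g : nat -> int) :
  zp_wcoh p f -> zp_wcoh p g -> zp_wcoh p (fun n => f n + g n).
Proof. by move=> Hf Hg n; rewrite -modzDm Hf Hg modzDm. Qed.

Lemma zp_wcohM (p : nat) (f g : nat -> int) :
  zp_wcoh p f -> zp_wcoh p g -> zp_wcoh p (fun n => f n * g n).
Proof. by move=> Hf Hg n; rewrite -modzMm Hf Hg modzMm. Qed.

Lemma zp_wcohN (p : nat) (f : nat -> int) :
  zp_wcoh p f -> zp_wcoh p (fun n => - f n).
Proof. by move=> Hf n; rewrite -modzNm Hf modzNm. Qed.

Definition zp_zero (p : nat) : Zpadic p := zp_mk (zp_wcoh_cst p 0).
Definition zp_one (p : nat) : Zpadic p := zp_mk (zp_wcoh_cst p 1).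
Definition zp_add (p : nat) (x y : Zpadic p) : Zpadic p :=
  zp_mk (zp_wcohD (zp_coh_wcoh x) (zp_coh_wcoh y)).
Definition zp_mul (p : nat) (x y : Zpadic p) : Zpadic p :=
  zp_mk (zp_wcohM (zp_coh_wcoh x) (zp_coh_wcoh y)).
Definition zp_opp (p : nat) (x : Zpadic p) : Zpadic p := zp_mk (zp_wcohN (zp_coh_wcoh x)).

Lemma zp_addA (p : nat) : associative (@zp_add p).
Proof.
move=> x y z; apply: zp_inj; apply: funext => n /=.
by rewrite modzDml modzDmr addrA.
Qed.

Lemma zp_addC (p : nat) : commutative (@zp_add p).
Proof. by move=> x y; apply: zp_inj; apply: funext => n /=; rewrite addrC. Qed.

Lemma zp_add0 (p : nat) : left_id (@zp_zero p) (@zp_add p).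
Proof.
by move=> x; apply: zp_inj; apply: funext => n /=; rewrite mod0z add0r zp_red.
Qed.

Lemma zp_addN (p : nat) : left_inverse (@zp_zero p) (@zp_opp p) (@zp_add p).
Proof.
by move=> x; apply: zp_inj; apply: funext => n /=; rewrite modzDml addNr.
Qed.

HB.instance Definition _ (p : nat) :=
  GRing.isZmodule.Build (Zpadic p) (@zp_addA p) (@zp_addC p) (@zp_add0 p) (@zp_addN p).

Lemma zp_mulA (p : nat) : associative (@zp_mul p).
Proof.
move=> x y z; apply: zp_inj; apply: funext => n /=.
by rewrite modzMml modzMmr mulrA.
Qed.

Lemma zp_mulC (p : nat) : commutative (@zp_mul p).
Proof. by move=> x y; apply: zp_inj; apply: funext => n /=; rewrite mulrC. Qed.

Lemma zp_mul1 (p : nat) : left_id (@zp_one p) (@zp_mul p).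
Proof.
by move=> x; apply: zp_inj; apply: funext => n /=; rewrite modzMml mul1r zp_red.
Qed.

Lemma zp_mulDl (p : nat) : left_distributive (@zp_mul p) (@zp_add p).
Proof.
move=> x y z; apply: zp_inj; apply: funext => n /=.
by rewrite modzMml mulrDl modzDm.
Qed.

HB.instance Definition _ (p : nat) :=
  GRing.Zmodule_isComPzRing.Build (Zpadic p) (@zp_mulA p) (@zp_mulC p)
    (@zp_mul1 p) (@zp_mulDl p).

(* x lies in p^n Z_p, i.e. |x|_p <= p^-n *)
Definition zp_in_pow (p : nat) (n : nat) (x : Zpadic p) : Prop := zp_seq x n = 0.

(* Rings of integers of finite extensions of Q_p (= the rings O_{F_v}).      *)
(* O is a domain, finite free as a Z_p-module, integrally closed in its      *)
(* fraction field.                                                           *)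

Definition padic_int_ring (p : nat) (O : idomainType) (iO : {rmorphism Zpadic p -> O}) :=
  (exists (k : nat) (e : 'I_k -> O),
      forall a : O, exists! c : 'I_k -> Zpadic p, a = \sum_(i < k) iO (c i) * e i)
  /\ (forall a b : O, b != 0 ->
        (exists (n : nat) (c : 'I_n -> O),
            a ^+ n + \sum_(i < n) c i * a ^+ i * b ^+ (n - i) = 0) ->
        exists q : O, a = q * b).

Definition in_ppow (O : comPzRingType) (p n : nat) (a : O) : Prop :=
  exists c : O, a = (p ^ n)%N%:R * c.

(* The torus T = prod_v Res_{O_v/Z_p} G_m^{d_v}; its Z_p-points are          *)
(* T_0 = prod_v (O_v^x)^{d_v}.                                               *)

Definition torus_pts (m : nat) (O : 'I_m -> idomainType) (d : 'I_m -> nat) : Type :=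
  forall v : 'I_m, 'I_(d v) -> O v.

Definition tmul (m : nat) (O : 'I_m -> idomainType) (d : 'I_m -> nat)
  (t t' : torus_pts O d) : torus_pts O d := fun v i => t v i * t' v i.

Definition in_T0 (m : nat) (O : 'I_m -> idomainType) (d : 'I_m -> nat)
  (t : torus_pts O d) : Prop := forall v i, t v i \is a GRing.unit.

Definition eps_p (p : nat) : nat := if p == 2%N then 2%N else 1%N.

(* T_eps = kernel of T(Z_p) -> T(Z/p^eps) *)
Definition in_Teps (p : nat) (m : nat) (O : 'I_m -> idomainType) (d : 'I_m -> nat)
  (t : torus_pts O d) : Prop :=
  in_T0 t /\ forall v i, in_ppow p (eps_p p) (t v i - 1).

Definition is_na_norm (A : comUnitRingType) (N : A -> Rdefinitions.R) : Prop :=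
  [/\ (forall x, 0 <= N x),
      (forall x, N x = 0 <-> x = 0),
      (forall x y, N (x + y) <= Num.max (N x) (N y)),
      (forall x, N (- x) = N x) /\
      (forall x y, N (x * y) <= N x * N y) & N 1 = 1].

Definition norm_complete (A : comUnitRingType) (N : A -> Rdefinitions.R) : Prop :=
  forall u : nat -> A,
    (forall e : Rdefinitions.R, 0 < e -> exists M : nat, forall m n : nat,
        (M <= m)%N -> (M <= n)%N -> N (u m - u n) < e) ->
    exists l : A, forall e : Rdefinitions.R, 0 < e -> exists M : nat, forall n : nat,
        (M <= n)%N -> N (u n - l) < e.

Definition mult_pseudo_unif (A : comUnitRingType) (N : A -> Rdefinitions.R) (w : A) : Prop :=
  [/\ w \is a GRing.unit, N w < 1 & (forall s, N (w * s) = N w * N s)].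

Definition zp_contractive (p : nat) (A : comUnitRingType) (N : A -> Rdefinitions.R)
  (iota : {rmorphism Zpadic p -> A}) : Prop :=
  forall (n : nat) (x : Zpadic p), zp_in_pow n x -> N (iota x) <= (p%:R : Rdefinitions.R) ^- n.

Definition banach_tate (p : nat) (A : comUnitRingType) (N : A -> Rdefinitions.R) (w : A)
  (iota : {rmorphism Zpadic p -> A}) : Prop :=
  [/\ is_na_norm N, norm_complete N, mult_pseudo_unif N w & zp_contractive N iota].

Definition bounded_equiv (A : Type) (N1 N2 : A -> Rdefinitions.R) : Prop :=
  exists C1 C2 : Rdefinitions.R, [/\ 0 < C1, 0 < C2 & (forall r, C1 * N1 r <= N2 r <= C2 * N1 r)].

Definition noetherian (A : comUnitRingType) : Prop :=
  forall I : A -> Prop,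
    I 0 -> (forall x y, I x -> I y -> I (x + y)) -> (forall a x, I x -> I (a * x)) ->
    exists (n : nat) (g : 'I_n -> A),
      forall x, I x <-> exists c : 'I_n -> A, x = \sum_(i < n) c i * g i.

Definition is_character (m : nat) (O : 'I_m -> idomainType) (d : 'I_m -> nat)
  (A : comUnitRingType) (kappa : torus_pts O d -> A) : Prop :=
  (forall t, in_T0 t -> kappa t \is a GRing.unit) /\
  (forall t t', in_T0 t -> in_T0 t' -> kappa (tmul t t') = kappa t * kappa t').

Definition char_continuous (p : nat) (m : nat) (O : 'I_m -> idomainType)
  (d : 'I_m -> nat) (A : comUnitRingType) (N : A -> Rdefinitions.R)
  (kappa : torus_pts O d -> A) : Prop :=
  forall t0, in_T0 t0 -> forall e : Rdefinitions.R, 0 < e -> exists n : nat,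
    forall t, in_T0 t -> (forall v i, in_ppow p n (t v i - t0 v i)) ->
      N (kappa t - kappa t0) < e.

(* Main.v *)
Require Import Defs.
From HB Require Import structures.
From mathcomp Require Import all_boot all_order all_algebra.
From Stdlib Require Rdefinitions.
From mathcomp Require Import boolp classical_sets reals Rstruct exp.
From mathcomp Require Import ring lra.
Import Order.TTheory GRing.Theory Num.Theory.
Local Open Scope ring_scope.

Module SubP1.
Import Order.TTheory GRing.Theory Num.Theory.
Local Open Scope ring_scope.

Section ZpFacts.
Variable p : nat.
Hypothesis p_gt0 : (0 < p)%N.

Lemma zmodn_neq0 n : zmodn p n != 0.
Proof. have := expn_gt0 p n; rewrite p_gt0 /zmodn. by case: (p ^ n)%N. Qed.

Lemma zp_seqD (x y : Zpadic p) n :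
  zp_seq (x + y) n = ((zp_seq x n + zp_seq y n) %% zmodn p n)%Z.
Proof. by []. Qed.

Lemma zp_seqM (x y : Zpadic p) n :
  zp_seq (x * y) n = ((zp_seq x n * zp_seq y n) %% zmodn p n)%Z.
Proof. by []. Qed.

Lemma zp_seqN (x : Zpadic p) n :
  zp_seq (- x) n = ((- zp_seq x n) %% zmodn p n)%Z.
Proof. by []. Qed.

Lemma zp_seq1 n : zp_seq (1 : Zpadic p) n = (1 %% zmodn p n)%Z.
Proof. by []. Qed.

Lemma zp_seq0 n : zp_seq (0 : Zpadic p) n = 0.
Proof. by rewrite /= mod0z. Qed.

Lemma zp_seq_natr k n : zp_seq (k%:R : Zpadic p) n = ((k%:Z) %% zmodn p n)%Z.
Proof.
elim: k => [|k IH]; first by rewrite zp_seq0 mod0z.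
by rewrite mulrS zp_seqD zp_seq1 IH modzDm -addn1 PoszD addrC.
Qed.

Lemma zp_seqB (x y : Zpadic p) n :
  zp_seq (x - y) n = ((zp_seq x n - zp_seq y n) %% zmodn p n)%Z.
Proof. by rewrite zp_seqD zp_seqN modzDmr. Qed.

Lemma zp_in_pow0 (x : Zpadic p) : zp_in_pow 0 x.
Proof. by rewrite /zp_in_pow -zp_red /zmodn expn0 modz1. Qed.

Lemma zp_in_pow_p : zp_in_pow 1 (p%:R : Zpadic p).
Proof. by rewrite /zp_in_pow zp_seq_natr /zmodn expn1 modzz. Qed.

Lemma zp_seq_le (x : Zpadic p) a b : (b <= a)%N ->
  (zp_seq x a %% zmodn p b)%Z = zp_seq x b.
Proof.
move=> /subnK <-; elim: (a - b)%N => [|c IH]; first by rewrite add0n zp_red.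
rewrite addSn -(@modz_dvdm _ _ (zmodn p (c + b))) ?zp_cohP //.
by rewrite /zmodn dvdzE /= dvdn_exp2l // leq_addl.
Qed.

Lemma zp_div (x : Zpadic p) n : zp_in_pow n x ->
  exists q : Zpadic p, x = (p ^ n)%N%:R * q.
Proof.
rewrite /zp_in_pow => x0.
pose P := zmodn p n.
have dvdP a : (P %| zp_seq x (a + n))%Z.
  by apply/dvdz_mod0P; rewrite /P zp_seq_le ?leq_addl.
pose f a := (zp_seq x (a + n) %/ P)%Z.
have fE a : f a * P = zp_seq x (a + n) by rewrite /f divzK.
have Hf : zp_wcoh p f.
  rewrite /zp_wcoh => a; apply/eqP; rewrite eqz_mod_dvd.
  have : (zmodn p a * P %| (f a.+1 - f a) * P)%Z.
    rewrite mulrBl !fE /P /zmodn -PoszM -expnD -eqz_mod_dvd addSn.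
    by rewrite -/(zmodn p (a + n)) zp_cohP zp_red.
  by rewrite dvdz_mul2r // zmodn_neq0.
exists (zp_mk Hf); apply: zp_inj; apply: funext => a /=.
rewrite zp_seq_natr modzMm -/P.
have -> : ((Posz (p ^ n)%N) * f a)%Z = zp_seq x (a + n) by rewrite -fE mulrC.
by rewrite zp_seq_le ?leq_addr.
Qed.

End ZpFacts.

End SubP1.
Import SubP1.

Module SubP2.
Import Order.TTheory GRing.Theory Num.Theory.
Local Open Scope ring_scope.

Section PPow.
Variables (O : comPzRingType) (p : nat).

Lemma in_ppowD n (a b : O) : in_ppow p n a -> in_ppow p n b -> in_ppow p n (a + b).
Proof. by move=> [c ->] [c' ->]; exists (c + c'); rewrite mulrDr. Qed.

Lemma in_ppowN n (a : O) : in_ppow p n a -> in_ppow p n (- a).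
Proof. by move=> [c ->]; exists (- c); rewrite mulrN. Qed.

Lemma in_ppowMr n (a b : O) : in_ppow p n a -> in_ppow p n (a * b).
Proof. by move=> [c ->]; exists (c * b); rewrite mulrA. Qed.

Lemma in_ppowMl n (a b : O) : in_ppow p n b -> in_ppow p n (a * b).
Proof. by rewrite mulrC; apply: in_ppowMr. Qed.

Lemma in_ppow0 n : in_ppow p n (0 : O).
Proof. by exists 0; rewrite mulr0. Qed.

Lemma in_ppow_le k n (a : O) : (k <= n)%N -> in_ppow p n a -> in_ppow p k a.
Proof.
move=> /subnK <- [c ->]; exists ((p ^ (n - k))%N%:R * c).
by rewrite expnD natrM mulrA [_ * (p ^ k)%N%:R]mulrC.
Qed.

Lemma in_ppow_sum n (I : Type) (r : seq I) (F : I -> O) :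
  (forall i, in_ppow p n (F i)) -> in_ppow p n (\sum_(i <- r) F i).
Proof.
move=> H; elim: r => [|x r IH]; first by rewrite big_nil; apply: in_ppow0.
by rewrite big_cons; apply: in_ppowD.
Qed.

Lemma in_ppow_expB1 (a : O) j : in_ppow p 1 (a - 1) -> in_ppow p 1 (a ^+ j - 1).
Proof.
move=> H; have -> : a ^+ j - 1 = a ^+ j - 1 ^+ j by rewrite expr1n.
by rewrite subrXX; apply: in_ppowMr.
Qed.

Lemma in_ppow_step e (a : O) : (0 < e)%N -> in_ppow p e (a - 1) ->
  in_ppow p e.+1 (a ^+ p - 1).
Proof.
move=> e0 He.
have H1 : in_ppow p 1 (a - 1) by apply: in_ppow_le He.
have -> : a ^+ p - 1 = a ^+ p - 1 ^+ p by rewrite expr1n.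
rewrite subrXX.
set S := \sum_(_ < _) _.
have HS : in_ppow p 1 S.
  have -> : S = \sum_(i < p) (a ^+ (p.-1 - i) - 1) + p%:R.
    rewrite /S sumrB sumr_const card_ord subrK.
    by apply: eq_bigr => i _; rewrite expr1n mulr1.
  apply: in_ppowD; first by apply: in_ppow_sum => i; apply: in_ppow_expB1.
  by exists 1; rewrite expn1 mulr1.
case: He => c ->; case: HS => c' ->.
exists (c * c'); rewrite expn1 expnSr natrM; ring.

Qed.

Lemma in_ppow_iter (a : O) j : in_ppow p 1 (a - 1) ->
  in_ppow p j.+1 (a ^+ (p ^ j) - 1).
Proof.
move=> H; elim: j => [|j IH]; first by rewrite expn0 expr1.
by rewrite expnSr exprM; apply: in_ppow_step.
Qed.

End PPow.

End SubP2.
Import SubP2.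

Module SubP3.
Import Order.TTheory GRing.Theory Num.Theory.
Local Open Scope ring_scope.
Local Open Scope classical_set_scope.

Set Implicit Arguments.
Unset Strict Implicit.
Local Notation R := Rdefinitions.R.

Lemma supf_ub {T : Type} (P : set T) (f : T -> R) (M : R) x :
  (forall y, P y -> f y <= M) -> P x -> f x <= sup [set f y | y in P].
Proof.
move=> HM Px; apply: sup_upper_bound; last by exists x.
split; first by exists (f x), x.
by exists M => _ [y Py <-]; apply: HM.
Qed.

Lemma supf_le {T : Type} (P : set T) (f : T -> R) (M : R) :
  (exists x, P x) -> (forall y, P y -> f y <= M) -> sup [set f y | y in P] <= M.
Proof.
move=> [x Px] HM; apply: ge_sup; first by exists (f x), x.
by move=> _ [y Py <-]; apply: HM.
Qed.

Section NormBasic.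
Variables (A : comUnitRingType) (N : A -> R).
Hypothesis HN : is_na_norm N.

Lemma N_ge0 x : 0 <= N x. Proof. by case: HN. Qed.
Lemma N_eq0 x : N x = 0 <-> x = 0. Proof. by case: HN. Qed.
Lemma N0 : N 0 = 0. Proof. by apply/N_eq0. Qed.
Lemma N_ult x y : N (x + y) <= Num.max (N x) (N y). Proof. by case: HN. Qed.
Lemma N_opp x : N (- x) = N x. Proof. by case: HN => _ _ _ []. Qed.
Lemma N_mul x y : N (x * y) <= N x * N y. Proof. by case: HN => _ _ _ []. Qed.
Lemma N1 : N 1 = 1. Proof. by case: HN. Qed.
Lemma N_subC x y : N (x - y) = N (y - x). Proof. by rewrite -N_opp opprB. Qed.
Lemma N_add_le x y M : N x <= M -> N y <= M -> N (x + y) <= M.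
Proof. by move=> hx hy; apply: le_trans (N_ult x y) _; rewrite ge_max hx hy. Qed.
Lemma N_gt0 x : x != 0 -> 0 < N x.
Proof.
move=> x0; rewrite lt_neqAle N_ge0 andbT; apply/eqP => /esym /N_eq0 h.
by rewrite h eqxx in x0.
Qed.
End NormBasic.

Section Norm2.
Variables (A : comUnitRingType) (N : A -> R).
Hypothesis HN : is_na_norm N.
Variables (K : A -> Prop) (B : R).
Hypotheses (K1 : K 1) (KM : forall a b, K a -> K b -> K (a * b))
  (KB : forall a, K a -> N a <= B).

Definition N2 (y : A) : R := sup [set N (k * y) | k in K].

Lemma B_ge1 : 1 <= B. Proof. by rewrite -(N1 HN); apply: KB. Qed.
Lemma B_ge0 : 0 <= B. Proof. exact: le_trans ler01 B_ge1. Qed.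

Lemma N2_ub k y : K k -> N (k * y) <= N2 y.
Proof.
move=> Kk; apply: (@supf_ub _ K (fun k => N (k * y)) (B * N y)) => // k' Kk'.
by apply: le_trans (N_mul HN _ _) _; apply: ler_wpM2r; [apply: N_ge0|apply: KB].
Qed.

Lemma N2_le y M : (forall k, K k -> N (k * y) <= M) -> N2 y <= M.
Proof. by move=> H; apply: supf_le => //; exists 1. Qed.

Lemma N_le_N2 y : N y <= N2 y.
Proof. by rewrite -{1}(mul1r y); apply: N2_ub. Qed.

Lemma N2_ge0 y : 0 <= N2 y.
Proof. exact: le_trans (N_ge0 HN y) (N_le_N2 y). Qed.

Lemma N2_leB y : N2 y <= B * N y.
Proof.
apply: N2_le => k Kk; apply: le_trans (N_mul HN _ _) _.
by apply: ler_wpM2r; [apply: N_ge0|apply: KB].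
Qed.

Lemma N2_add u v : N2 (u + v) <= Num.max (N2 u) (N2 v).
Proof.
apply: N2_le => k Kk; rewrite mulrDr; apply: le_trans (N_ult HN _ _) _.
rewrite ge_max !le_max (N2_ub _ Kk) (N2_ub v Kk) orbT.
by rewrite andbT.
Qed.

Lemma N2_opp u : N2 (- u) = N2 u.
Proof.
apply/eqP; rewrite eq_le; apply/andP; split; apply: N2_le => k Kk.
  by rewrite mulrN (N_opp HN); apply: N2_ub.
by rewrite -(N_opp HN) -mulrN; apply: N2_ub.
Qed.

Lemma N2_scale w cw y : (forall s, N (w * s) = cw * N s) -> 0 < cw ->
  N2 (w * y) = cw * N2 y.
Proof.
move=> Hw cw0; apply/eqP; rewrite eq_le; apply/andP; split.
  apply: N2_le => k Kk; rewrite mulrCA Hw; apply: ler_wpM2l; first exact: ltW.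
  exact: N2_ub.
rewrite -ler_pdivlMl //; apply: N2_le => k Kk.
by rewrite ler_pdivlMl // -Hw mulrCA; apply: N2_ub.
Qed.

Definition Op (a : A) (r : R) := forall z, N2 (a * z) <= r * N2 z.

Lemma Op_N a : Op a (N a).
Proof.
move=> z; apply: N2_le => k Kk; rewrite mulrCA; apply: le_trans (N_mul HN _ _) _.
by apply: ler_wpM2l; [apply: N_ge0|apply: N2_ub].
Qed.

Lemma Op_K k : K k -> Op k 1.
Proof.
move=> Kk z; rewrite mul1r; apply: N2_le => k' Kk'.
by rewrite mulrA; apply: N2_ub; apply: KM.
Qed.

Lemma Op1 : Op 1 1.
Proof. exact: Op_K. Qed.

Lemma Op_le a r s : r <= s -> Op a r -> Op a s.
Proof. by move=> rs H z; apply: le_trans (H z) _; apply: ler_wpM2r => //; apply: N2_ge0. Qed.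

Lemma Op_add a b r : Op a r -> Op b r -> Op (a + b) r.
Proof.
move=> Ha Hb z; rewrite mulrDl; apply: le_trans (N2_add _ _) _.
by rewrite ge_max Ha Hb.
Qed.

Lemma Op_opp a r : Op a r -> Op (- a) r.
Proof. by move=> Ha z; rewrite mulNr N2_opp. Qed.

Lemma Op_sub a b r : Op a r -> Op b r -> Op (a - b) r.
Proof. by move=> Ha Hb; apply: Op_add => //; apply: Op_opp. Qed.

Lemma Op_mul a b r s : 0 <= r -> Op a r -> Op b s -> Op (a * b) (r * s).
Proof.
move=> r0 Ha Hb z; rewrite -mulrA; apply: le_trans (Ha _) _.
by rewrite -mulrA; apply: ler_wpM2l.
Qed.

Lemma Op_exp a r n : 0 <= r -> Op a r -> Op (a ^+ n) (r ^+ n).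
Proof.
move=> r0 Ha; elim: n => [|n IH]; first by rewrite !expr0; apply: Op1.
by rewrite !exprS; apply: Op_mul.
Qed.

Lemma Op_ge0 a r : Op a r -> a != 0 -> 0 <= r.
Proof.
move=> Ha a0; have := Ha 1; rewrite mulr1 => h.
have h2 : 0 < N2 1 by apply: lt_le_trans (N_le_N2 1); rewrite (N1 HN) ltr01.
by rewrite -(pmulr_lge0 _ h2); apply: le_trans (N2_ge0 a) h.
Qed.


Lemma Op0 r : 0 <= r -> Op 0 r.
Proof. by move=> r0; apply: Op_le r0 _; rewrite -(N0 HN); apply: Op_N. Qed.

Lemma Op_prod (I : Type) (P : I -> Prop) (x : I -> A) (s : seq I) :
  (forall i, P i -> Op (x i) 1) -> List.Forall P s -> Op (\prod_(i <- s) x i) 1.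
Proof.
move=> H; elim: s => [|i s IH] Hs; first by rewrite big_nil; apply: Op1.
inversion Hs; subst; rewrite big_cons.
have -> : (1 : R) = 1 * 1 by rewrite mulr1.
apply: Op_mul; [exact: ler01| by apply: H | by apply: IH].
Qed.

Lemma Op_prod_all (I : Type) (x : I -> A) (s : seq I) :
  (forall i, Op (x i) 1) -> Op (\prod_(i <- s) x i) 1.
Proof.
move=> H; apply: (@Op_prod I (fun _ => True)) => // {H}.
by elim: s => [|i s IH]; constructor.
Qed.

Lemma Op_perturb (I : Type) (P : I -> Prop) (a e : I -> A) (d : R) (s : seq I) :
  0 <= d <= 1 -> (forall i, P i -> Op (a i) 1) -> (forall i, P i -> Op (e i) d) ->
  List.Forall P s ->
  Op (\prod_(i <- s) (a i + e i) - \prod_(i <- s) a i) d.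
Proof.
move=> /andP[d0 d1] Ha He; elim: s => [|i s IH] Hs.
  by rewrite !big_nil subrr; apply: Op0.
inversion Hs; subst; rewrite !big_cons.
set P1 := \prod_(_ <- _) (_ + _); set P0 := \prod_(_ <- _) _.
have -> : (a i + e i) * P1 - a i * P0 = a i * (P1 - P0) + e i * P1 by ring.
have HP0 : Op P0 1 by apply: Op_prod Ha _.
have HP1 : Op P1 1.
  have -> : P1 = P0 + (P1 - P0) by ring.
  by apply: Op_add => //; apply: Op_le d1 _; apply: IH.
apply: Op_add.
  rewrite -[d]mul1r; apply: Op_mul; [exact: ler01| by apply: Ha | by apply: IH].
rewrite -[d]mulr1; apply: Op_mul => //; by apply: He.
Qed.

Lemma sum_count (G : finType) (s : seq G) : (\sum_(g : G) count_mem g s)%N = size s.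
Proof.
elim: s => [|x s IH] /=; first by rewrite big1.
rewrite big_split /= IH (bigD1 x) //= eqxx big1 // => g /negbTE.
by rewrite eq_sym => ->.
Qed.

Lemma prod_count (G : finType) (f : G -> A) (s : seq G) :
  \prod_(g <- s) f g = \prod_(g : G) f g ^+ count_mem g s.
Proof.
elim: s => [|x s IH]; first by rewrite big_nil big1 // => g _; rewrite expr0.
rewrite big_cons IH /=.
under [RHS]eq_bigr => g _ do rewrite exprD.
rewrite big_split /=; congr (_ * _).
rewrite (bigD1 x) //= eqxx expr1 big1 ?mulr1 // => g /negbTE.
by rewrite eq_sym => ->; rewrite expr0.
Qed.

Lemma Op_pigeon (G : finType) (f : G -> A) (M : nat) (r : R) (s : seq G) :
  0 <= r <= 1 -> (forall g, Op (f g) 1) -> (forall g, Op (f g ^+ M) r) ->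
  (0 < size s)%N -> (#|G| * M <= size s)%N -> Op (\prod_(g <- s) f g) r.
Proof.
move=> /andP[r0 r1] Hf HM Hs0 Hs.
have [g0 Hg0] : exists g, (M <= count_mem g s)%N.
  apply/not_existsP => H.
  have HG : (0 < #|G|)%N.
    by case: s Hs0 {Hs H} => [|x s] //= _; apply/card_gt0P; exists x.
  have HM0 : (0 < M)%N.
    by case: s Hs0 {Hs} H => [|x s] //= _ /(_ x); case: M {HM}.
  have Hle : (size s <= #|G| * M.-1)%N.
    rewrite -sum_count -sum1_card big_distrl /=; apply: leq_sum => g _.
    rewrite mul1n -ltnS prednK //; rewrite ltnNge; apply/negP; exact: H.
  move: Hs; rewrite leqNgt => /negP; apply.
  apply: leq_ltn_trans Hle _; rewrite ltn_pmul2l //; case: M HM0 {HM H} => //.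
rewrite prod_count (bigD1 g0) //= -(subnKC Hg0) exprD.
have -> : r = r * 1 * 1 by rewrite !mulr1.
apply: Op_mul; first by rewrite mulr1.
  apply: Op_mul => //.
  rewrite -(expr1n R (count_mem g0 s - M)%N); apply: Op_exp; [exact: ler01|exact: Hf].
rewrite -big_filter; apply: Op_prod_all => g.
rewrite -(expr1n R (count_mem g s)); apply: Op_exp; [exact: ler01|exact: Hf].
Qed.

Lemma Op_prod_bound (I : Type) (P : I -> Prop) (x : I -> A) (G : finType)
  (f : G -> A) (gs : I -> G) (M : nat) (r : R) (s : seq I) :
  0 <= r <= 1 -> (forall g, Op (f g) 1) -> (forall g, Op (f g ^+ M) r) ->
  (forall i, P i -> Op (x i - f (gs i)) r) -> List.Forall P s ->
  (0 < size s)%N -> (#|G| * M <= size s)%N -> Op (\prod_(i <- s) x i) r.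
Proof.
move=> hr Hf HM He Hs s0 sM.
have -> : \prod_(i <- s) x i = \prod_(g <- map gs s) f g +
   (\prod_(i <- s) (f (gs i) + (x i - f (gs i))) - \prod_(i <- s) f (gs i)).
  have E1 : \prod_(i <- s) (f (gs i) + (x i - f (gs i))) = \prod_(i <- s) x i.
    by apply: eq_bigr => i _; rewrite addrC subrK.
  by rewrite E1 big_map [RHS]addrC subrK.
apply: Op_add.
  by apply: Op_pigeon => //; rewrite size_map.
case/andP: hr => r0 r1.
apply: (Op_perturb (P := P)); [by rewrite r0 r1 | by move=> i _; apply: Hf | exact: He | exact: Hs].
Qed.

Lemma Forall_take (I : Type) (P : I -> Prop) n (s : seq I) :
  List.Forall P s -> List.Forall P (take n s).
Proof.
elim: s n => [|i s IH] [|n] H //=; inversion H; subst; constructor => //.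
exact: IH.
Qed.

Lemma Forall_drop (I : Type) (P : I -> Prop) n (s : seq I) :
  List.Forall P s -> List.Forall P (drop n s).
Proof.
elim: s n => [|i s IH] [|n] H //=; inversion H; subst => //.
exact: IH.
Qed.

Lemma Op_chunks (I : Type) (P : I -> Prop) (x : I -> A) (c : R) (L0 : nat) :
  0 < c -> c <= 1 -> (0 < L0)%N -> (forall i, P i -> Op (x i) 1) ->
  (forall s, List.Forall P s -> size s = L0 -> Op (\prod_(i <- s) x i) (c ^+ L0)) ->
  forall s, List.Forall P s -> Op (\prod_(i <- s) x i) (c ^+ size s / c ^+ L0).
Proof.
move=> c0 c1 L00 Hx Hch s.
have cL0 : 0 < c ^+ L0 by apply: exprn_gt0.
have [n Hn] : exists n, (size s <= n)%N by exists (size s).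
elim: n s Hn => [|n IH] s Hn Hs.
  move: Hn; rewrite leqn0 => /eqP; move/size0nil => ->.
  rewrite big_nil expr0; apply: Op_le Op1.
  by rewrite ler_pdivlMr // mul1r exprn_ile1 // ltW.
have [Hlt|Hge] := ltnP (size s) L0.
  apply: Op_le (Op_prod Hx Hs).
  by rewrite ler_pdivlMr // mul1r; apply: ler_wiXn2l => //; [exact: ltW|exact: ltnW].
rewrite -(cat_take_drop L0 s) big_cat /= size_cat size_takel // size_drop.
rewrite exprD -mulrA; apply: Op_mul; first exact: ltW.
  by apply: Hch; [exact: Forall_take|rewrite size_takel].
have := IH (drop L0 s); rewrite size_drop; apply => //; last exact: Forall_drop.
by rewrite leq_subLR; apply: leq_trans Hn _; rewrite -addn1 addnC leq_add2r.
Qed.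

Variables (I : Type) (P : I -> Prop) (x : I -> A) (c : R) (L0 : nat).
Hypotheses (c0 : 0 < c) (c1 : c < 1)
  (Hprod : forall s, List.Forall P s -> Op (\prod_(i <- s) x i) (c ^+ size s / c ^+ L0)).

Definition N3 (y : A) : R :=
  sup [set c ^- size s * N2 (\prod_(i <- s) x i * y) | s in (fun s => List.Forall P s)].

Lemma cX_gt0 n : 0 < c ^+ n. Proof. exact: exprn_gt0. Qed.
Lemma cinv_ge0 n : 0 <= c ^- n. Proof. by rewrite invr_ge0 ltW ?cX_gt0. Qed.

Lemma N3_term_le s y : List.Forall P s ->
  c ^- size s * N2 (\prod_(i <- s) x i * y) <= N2 y / c ^+ L0.
Proof.
move=> Hs; apply: le_trans (_ : c ^- size s * (c ^+ size s / c ^+ L0 * N2 y) <= _).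
  by apply: ler_wpM2l; [exact: cinv_ge0|exact: (Hprod Hs y)].
by rewrite mulrA mulrA mulVf ?(lt0r_neq0 (cX_gt0 _)) // mul1r mulrC.
Qed.

Lemma N3_ub s y : List.Forall P s -> c ^- size s * N2 (\prod_(i <- s) x i * y) <= N3 y.
Proof.
move=> Hs; apply: (@supf_ub _ (fun s => List.Forall P s)
  (fun s => c ^- size s * N2 (\prod_(i <- s) x i * y)) (N2 y / c ^+ L0)) => //.
by move=> s' Hs'; apply: N3_term_le.
Qed.

Lemma N3_le y M : (forall s, List.Forall P s ->
  c ^- size s * N2 (\prod_(i <- s) x i * y) <= M) -> N3 y <= M.
Proof. by move=> H; apply: supf_le => //; exists [::]; constructor. Qed.

Lemma N2_le_N3 y : N2 y <= N3 y.
Proof.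
have := @N3_ub [::] y (List.Forall_nil _).
by rewrite big_nil mul1r expr0 invr1 mul1r.
Qed.

Lemma N3_le_N2 y : N3 y <= N2 y / c ^+ L0.
Proof. by apply: N3_le => s Hs; apply: N3_term_le. Qed.

Lemma N3_ge0 y : 0 <= N3 y.
Proof. exact: le_trans (N2_ge0 y) (N2_le_N3 y). Qed.

Lemma N3_Op a r y : 0 <= r -> Op a r -> N3 (a * y) <= r * N3 y.
Proof.
move=> r0 Ha; apply: N3_le => s Hs.
rewrite mulrCA; apply: le_trans (_ : c ^- size s * (r * N2 (\prod_(i <- s) x i * y)) <= _).
  by apply: ler_wpM2l; [exact: cinv_ge0|exact: Ha].
by rewrite mulrCA; apply: ler_wpM2l => //; apply: N3_ub.
Qed.

Lemma N3_add u v : N3 (u + v) <= Num.max (N3 u) (N3 v).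
Proof.
apply: N3_le => s Hs; rewrite mulrDr.
apply: le_trans (_ : c ^- size s * Num.max (N2 (\prod_(i <- s) x i * u))
   (N2 (\prod_(i <- s) x i * v)) <= _).
  by apply: ler_wpM2l; [exact: cinv_ge0|apply: N2_add].
rewrite maxr_pMr; last exact: cinv_ge0.
by rewrite ge_max !le_max (N3_ub u Hs) (N3_ub v Hs) orbT.
Qed.

Lemma N3_opp u : N3 (- u) = N3 u.
Proof.
apply/eqP; rewrite eq_le; apply/andP; split; apply: N3_le => s Hs.
  by rewrite mulrN N2_opp; apply: N3_ub.
by rewrite -N2_opp -mulrN; apply: N3_ub.
Qed.

Lemma N3_x i y : P i -> N3 (x i * y) <= c * N3 y.
Proof.
move=> Pi; apply: N3_le => s Hs.
have := @N3_ub (i :: s) y (List.Forall_cons _ Pi Hs).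
rewrite big_cons /= exprS invfM => h.
rewrite -[X in X <= _](mulVKf (lt0r_neq0 c0)); apply: ler_wpM2l; first exact: ltW.
apply: le_trans h; rewrite mulrA; by rewrite [_ * x i]mulrC mulrA.
Qed.

Lemma N3_scale w cw y : (forall s, N (w * s) = cw * N s) -> 0 < cw ->
  N3 (w * y) = cw * N3 y.
Proof.
move=> Hw cw0; apply/eqP; rewrite eq_le; apply/andP; split.
  apply: N3_le => s Hs; rewrite mulrCA (N2_scale _ Hw cw0) mulrCA.
  by apply: ler_wpM2l; [exact: ltW|apply: N3_ub].
rewrite -ler_pdivlMl //; apply: N3_le => s Hs.
rewrite ler_pdivlMl // mulrCA -(N2_scale _ Hw cw0) mulrCA.
exact: N3_ub.
Qed.

Lemma N3_pos z : z != 0 -> 0 < N3 z.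
Proof.
move=> z0; apply: lt_le_trans (N2_le_N3 z); apply: lt_le_trans (N_le_N2 z).
exact: N_gt0.
Qed.

Definition Nf (a : A) : R := sup [set N3 (a * z) / N3 z | z in (fun z : A => z != 0)].

Lemma Nf_ub a z : z != 0 -> N3 (a * z) / N3 z <= Nf a.
Proof.
move=> z0; apply: (@supf_ub _ (fun z : A => z != 0) (fun z => N3 (a * z) / N3 z) (N a)) => //.
move=> y y0; rewrite ler_pdivrMr ?N3_pos //; apply: N3_Op; first exact: N_ge0.
exact: Op_N.
Qed.

Lemma Nf_le a M : (forall z, z != 0 -> N3 (a * z) <= M * N3 z) -> Nf a <= M.
Proof.
move=> H; apply: supf_le; first by exists 1; apply: oner_neq0.
by move=> z z0; rewrite ler_pdivrMr ?N3_pos //; apply: H.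
Qed.

Lemma Nf_Op a r : 0 <= r -> Op a r -> Nf a <= r.
Proof. by move=> r0 Ha; apply: Nf_le => z _; apply: N3_Op. Qed.

Lemma Nf_leN a : Nf a <= N a.
Proof. by apply: Nf_Op; [apply: N_ge0|apply: Op_N]. Qed.

Lemma N3_1_gt0 : 0 < N3 1. Proof. by apply: N3_pos; apply: oner_neq0. Qed.

Lemma Nf_geN3 a : N3 a / N3 1 <= Nf a.
Proof. by have := Nf_ub a (oner_neq0 A); rewrite mulr1. Qed.

Lemma Nf_geN a : N a / N3 1 <= Nf a.
Proof.
apply: le_trans (Nf_geN3 a); rewrite ler_pM2r ?invr_gt0 ?N3_1_gt0 //.
exact: le_trans (N_le_N2 a) (N2_le_N3 a).
Qed.

Lemma Nf_ge0 a : 0 <= Nf a.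
Proof.
apply: le_trans (Nf_geN a); apply: divr_ge0; [exact: N_ge0|exact: N3_ge0].
Qed.

Lemma N3_0 : N3 0 = 0.
Proof.
apply/eqP; rewrite eq_le N3_ge0 andbT; apply: le_trans (N3_le_N2 0) _.
rewrite pmulr_lle0 ?invr_gt0 ?cX_gt0 //; apply: le_trans (N2_leB 0) _.
by rewrite (N0 HN) mulr0.
Qed.

Lemma Nf_mulz a z : N3 (a * z) <= Nf a * N3 z.
Proof.
have [->|z0] := eqVneq z 0; first by rewrite mulr0 N3_0 mulr0.
by rewrite -ler_pdivrMr ?N3_pos //; apply: Nf_ub.
Qed.

Lemma Nf0 : Nf 0 = 0.
Proof.
apply/eqP; rewrite eq_le Nf_ge0 andbT; apply: le_trans (Nf_leN 0) _.
by rewrite (N0 HN).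
Qed.

Lemma Nf_eq0 a : Nf a = 0 -> a = 0.
Proof.
move=> h; apply/(N_eq0 HN)/eqP; rewrite eq_le N_ge0 // andbT.
have := Nf_geN a; rewrite h pmulr_lle0 // invr_gt0; exact: N3_1_gt0.
Qed.

Lemma Nf_add a b : Nf (a + b) <= Num.max (Nf a) (Nf b).
Proof.
apply: Nf_le => z z0; rewrite mulrDl; apply: le_trans (N3_add _ _) _.
rewrite maxr_pMl; last exact: N3_ge0.
by rewrite ge_max !le_max !Nf_mulz orbT.
Qed.

Lemma Nf_opp a : Nf (- a) = Nf a.
Proof.
apply/eqP; rewrite eq_le; apply/andP; split; apply: Nf_le => z _.
  by rewrite mulNr N3_opp; apply: Nf_mulz.
by rewrite -N3_opp -mulNr; apply: Nf_mulz.
Qed.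

Lemma Nf_mul a b : Nf (a * b) <= Nf a * Nf b.
Proof.
apply: Nf_le => z _; rewrite -mulrA; apply: le_trans (Nf_mulz _ _) _.
by rewrite -mulrA; apply: ler_wpM2l; [apply: Nf_ge0|apply: Nf_mulz].
Qed.

Lemma Nf1 : Nf 1 = 1.
Proof.
apply/eqP; rewrite eq_le; apply/andP; split.
  by apply: Nf_le => z _; rewrite !mul1r.
by have := Nf_geN3 1; rewrite divff // lt0r_neq0 // N3_1_gt0.
Qed.

Lemma Nf_scale w cw a : (forall s, N (w * s) = cw * N s) -> 0 < cw ->
  Nf (w * a) = cw * Nf a.
Proof.
move=> Hw cw0; apply/eqP; rewrite eq_le; apply/andP; split.
  apply: Nf_le => z _; rewrite -mulrA (N3_scale _ Hw cw0) -mulrA.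
  by apply: ler_wpM2l; [exact: ltW|apply: Nf_mulz].
rewrite -ler_pdivlMl //; apply: Nf_le => z _.
rewrite -mulrA ler_pdivlMl // -(N3_scale _ Hw cw0) mulrA.
exact: Nf_mulz.
Qed.

Lemma Nf_x i : P i -> Nf (x i) <= c.
Proof. by move=> Pi; apply: Nf_le => z _; apply: N3_x. Qed.

Section Frob.
Variables (p : nat).
Hypotheses (pr : prime p) (Hnat : forall k : nat, Op (k%:R) 1).

Lemma Op_addr1 a b : Op a 1 -> Op b 1 -> Op (a + b) 1.
Proof. exact: Op_add. Qed.
Lemma Op_mul1 a b : Op a 1 -> Op b 1 -> Op (a * b) 1.
Proof. by move=> Ha Hb; rewrite -(mulr1 1); apply: Op_mul => //; exact: ler01. Qed.

Lemma Op_sum1 (J : Type) (r : seq J) (F : J -> A) :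
  (forall j, Op (F j) 1) -> Op (\sum_(j <- r) F j) 1.
Proof.
move=> H; elim: r => [|j r IH]; first by rewrite big_nil; apply: Op0; exact: ler01.
by rewrite big_cons; apply: Op_add.
Qed.

Lemma frob_L1 a b k : Op a 1 -> Op b 1 ->
  exists r, Op r 1 /\ (a + p%:R * b) ^+ k = a ^+ k + p%:R * r.
Proof.
move=> Ha Hb; elim: k => [|k [r [Hr Er]]].
  by exists 0; split; [apply: Op0; exact: ler01|rewrite !expr0 mulr0 addr0].
exists (a * r + b * a ^+ k + p%:R * b * r); split.
  apply: Op_addr1; first apply: Op_addr1; apply: Op_mul1 => //.
  - by rewrite -(expr1n R k); apply: Op_exp => //; exact: ler01.
  - exact: Op_mul1.
by rewrite exprS Er exprS; ring.
Qed.

Lemma frob_L2 z : Op z 1 ->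
  exists r, Op r 1 /\ (1 + z) ^+ p = 1 + z ^+ p + p%:R * r.
Proof.
move=> Hz; have [p' Ep] : exists p', p = p'.+2.
  by case: p pr => [|[|p']] //; exists p'.
rewrite addrC exprD1n Ep big_ord_recr /= big_ord_recl /=.
rewrite expr0 bin0 binn mulr1n mulr1n -Ep.
pose r := \sum_(i < p'.+1) z ^+ i.+1 *+ ('C(p, i.+1) %/ p).
exists r; split.
  apply: Op_sum1 => i; rewrite -mulr_natr; apply: Op_mul1 => //.
  by rewrite -(expr1n R i.+1); apply: Op_exp => //; exact: ler01.
rewrite /r mulr_sumr [RHS]addrAC; congr (_ + _ + _).
apply: eq_bigr => i _; rewrite /bump add1n mulr_natl -mulrnA divnK //.
apply: prime_dvd_bin => //; rewrite Ep /= ltnS; exact: ltn_ord.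
Qed.

Lemma frob y j : Op y 1 ->
  exists q, Op q 1 /\ (1 + y) ^+ (p ^ j) = 1 + y ^+ (p ^ j) + p%:R * q.
Proof.
move=> Hy; elim: j => [|j [q [Hq E]]].
  by exists 0; split; [apply: Op0; exact: ler01|rewrite expn0 !expr1 mulr0 addr0].
have Hyj : Op (y ^+ (p ^ j)) 1.
  by rewrite -(expr1n R (p ^ j)); apply: Op_exp => //; exact: ler01.
have [r1 [Hr1 E1]] := frob_L1 p (Op_addr1 Op1 Hyj) Hq.
have [r2 [Hr2 E2]] := frob_L2 Hyj.
exists (r2 + r1); split; first exact: Op_addr1.
by rewrite expnSr exprM E E1 E2 -exprM mulrDr addrA.
Qed.

End Frob.

End Norm2.

End SubP3.
Import SubP3.

Module SubP4.
Import Order.TTheory GRing.Theory Num.Theory.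
Local Open Scope ring_scope.
Set Implicit Arguments.
Unset Strict Implicit.

Unset Implicit Arguments.
Section Torus.
Variables (p m : nat) (O : 'I_m -> idomainType)
  (iO : forall v, {rmorphism Zpadic p -> O v}) (d : 'I_m -> nat).
Hypothesis p_gt0 : (0 < p)%N.
Variables (k : 'I_m -> nat) (eb : forall v, 'I_(k v) -> O v)
  (co : forall v, O v -> 'I_(k v) -> Zpadic p).
Hypothesis Hco : forall v a, a = \sum_(j < k v) iO v (co v a j) * eb v j.
Variable n : nat.

Definition Sidx := {v : 'I_m & {i : 'I_(d v) & 'I_(k v)}}.

Definition sigf (t : torus_pts O d) : {ffun Sidx -> 'I_(p ^ n).+1} :=
  [ffun s => inord (absz (zp_seq (co (tag s) (t (tag s) (tag (tagged s))) (tagged (tagged s))) n))].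

Lemma zp_seq_ge0 (x : Zpadic p) : (0 <= zp_seq x n)%R.
Proof. by rewrite -zp_red modz_ge0 // zmodn_neq0. Qed.

Lemma zp_seq_lt (x : Zpadic p) : (zp_seq x n < zmodn p n)%R.
Proof.
by rewrite -zp_red ltz_pmod // lt_neqAle eq_sym zmodn_neq0 //=.
Qed.

Lemma sigf_eq t t' : sigf t = sigf t' -> forall v i, in_ppow p n (t v i - t' v i).
Proof.
move=> E v i.
have Hj j : zp_seq (co v (t v i) j) n = zp_seq (co v (t' v i) j) n.
  have := congr1 (fun f : {ffun Sidx -> 'I_(p ^ n).+1} => f (existT _ v (existT _ i j) : Sidx)) E; rewrite !ffunE /=.
  move=> /(congr1 val) /=; rewrite !inordK.
  - move=> h; rewrite -(gez0_abs (zp_seq_ge0 _)) -(gez0_abs (zp_seq_ge0 (co v (t' v i) j))).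
    by rewrite h.
  - have := zp_seq_lt (co v (t' v i) j); rewrite -(gez0_abs (zp_seq_ge0 _)) /zmodn.
    by rewrite ltz_nat ltnS => /ltnW.
  - have := zp_seq_lt (co v (t v i) j); rewrite -(gez0_abs (zp_seq_ge0 _)) /zmodn.
    by rewrite ltz_nat ltnS => /ltnW.
rewrite [t v i](Hco v) [t' v i](Hco v) -sumrB; apply: in_ppow_sum => j.
rewrite -mulrBl -rmorphB; apply: in_ppowMr.
have Hd : zp_in_pow n (co v (t v i) j - co v (t' v i) j).
  by rewrite /zp_in_pow zp_seqB Hj subrr mod0z.
have [q ->] := @zp_div p p_gt0 _ n Hd.
by rewrite rmorphM rmorph_nat; exists (iO v q).
Qed.

End Torus.

Section TorusGroup.
Variables (m : nat) (O : 'I_m -> idomainType) (d : 'I_m -> nat).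

Definition tone : torus_pts O d := fun v i => 1.
Definition tinv (t : torus_pts O d) : torus_pts O d := fun v i => (t v i)^-1.
Definition tpow (t : torus_pts O d) (k : nat) : torus_pts O d := fun v i => (t v i) ^+ k.

Lemma text (t t' : torus_pts O d) : (forall v i, t v i = t' v i) -> t = t'.
Proof.
move=> H; apply: functional_extensionality_dep => v; apply: funext => i; exact: H.
Qed.

Lemma in_T0_one : in_T0 tone.
Proof. by move=> v i; apply: unitr1. Qed.

Lemma in_T0_mul (t t' : torus_pts O d) : in_T0 t -> in_T0 t' -> in_T0 (tmul t t').
Proof. by move=> H H' v i; rewrite /tmul unitrM; apply/andP; split; [apply: H|apply: H']. Qed.

Lemma in_T0_inv (t : torus_pts O d) : in_T0 t -> in_T0 (tinv t).
Proof. by move=> H v i; rewrite /tinv unitrV; apply: H. Qed.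

Lemma in_T0_pow (t : torus_pts O d) k : in_T0 t -> in_T0 (tpow t k).
Proof. by move=> H v i; rewrite /tpow unitrX //; apply: H. Qed.

Lemma tmul_inv (r t : torus_pts O d) : in_T0 r -> tmul r (tmul (tinv r) t) = t.
Proof. by move=> H; apply: text => v i; rewrite /tmul /tinv mulrA divrr ?mul1r //; apply: H. Qed.

Lemma tmul_one (t : torus_pts O d) : tmul tone t = t.
Proof. by apply: text => v i; rewrite /tmul /tone mul1r. Qed.

Lemma tpowS (t : torus_pts O d) k : tpow t k.+1 = tmul t (tpow t k).
Proof. by apply: text => v i; rewrite /tmul /tpow exprS. Qed.

Lemma tpow0 (t : torus_pts O d) : tpow t 0 = tone.
Proof. by apply: text => v i; rewrite /tpow expr0. Qed.

Lemma inv_ppow (p n : nat) (r t : torus_pts O d) v i : in_T0 r ->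
  in_ppow p n (t v i - r v i) -> in_ppow p n ((tmul (tinv r) t : torus_pts O d) v i - tone v i).
Proof.
move=> Hr H; have -> : (tmul (tinv r) t : torus_pts O d) v i - tone v i = (r v i)^-1 * (t v i - r v i).
  by rewrite /tmul /tinv /tone mulrBr mulVr //; apply: Hr.
exact: in_ppowMl.
Qed.

Variables (A : comUnitRingType) (kappa : torus_pts O d -> A).
Hypothesis Hk : is_character kappa.

Lemma kappa_one : kappa tone = 1.
Proof.
case: Hk => Hu Hm.
have u := Hu _ in_T0_one.
have E := Hm _ _ in_T0_one in_T0_one; rewrite tmul_one in E.
have := congr1 (fun y => y / kappa tone) E; by rewrite /= mulrK // divrr.
Qed.

Lemma kappa_pow (t : torus_pts O d) k : in_T0 t -> kappa (tpow t k) = kappa t ^+ k.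
Proof.
move=> Ht; elim: k => [|k IH]; first by rewrite tpow0 kappa_one expr0.
rewrite tpowS (proj2 Hk) //; first by rewrite IH exprS.
exact: in_T0_pow.
Qed.

Lemma kappa_split (r t : torus_pts O d) : in_T0 r -> in_T0 t ->
  kappa t = kappa r * kappa (tmul (tinv r) t).
Proof.
move=> Hr Ht; rewrite -(proj2 Hk) ?tmul_inv //.
by apply: in_T0_mul => //; apply: in_T0_inv.
Qed.

End TorusGroup.

Arguments tone {m O d}.
Arguments tinv {m O d}.
Arguments tpow {m O d}.
Arguments in_T0_one {m O d}.
Arguments in_T0_mul {m O d}.
Arguments in_T0_inv {m O d}.
Arguments in_T0_pow {m O d}.
Arguments tmul_inv {m O d}.
Arguments tpowS {m O d}.
Arguments inv_ppow {m O d}.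
Arguments kappa_one {m O d A kappa}.
Arguments kappa_pow {m O d A kappa}.
Arguments kappa_split {m O d A kappa}.

End SubP4.
Import SubP4.


Lemma bernoulli (a : Rdefinitions.R) k : 0 <= a <= 1 -> 1 - k%:R * a <= (1 - a) ^+ k.
Proof.
move=> /andP[a0 a1]; elim: k => [|k IH]; first by rewrite mul0r subr0 expr0.
rewrite exprSr; apply: le_trans (_ : (1 - k%:R * a) * (1 - a) <= _).
  have k0 : 0 <= k%:R :> Rdefinitions.R by apply: ler0n.
  rewrite -natr1; nra.
by apply: ler_wpM2r => //; lra.
Qed.

Theorem mainTheorem13 (p : nat) (m : nat) (O : 'I_m -> idomainType)
  (iO : forall v : 'I_m, {rmorphism Zpadic p -> O v}) (d : 'I_m -> nat)
  (A : comUnitRingType) (N : A -> Rdefinitions.R) (w : A) (iota : {rmorphism Zpadic p -> A})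
  (kappa : torus_pts O d -> A) :
  prime p ->
  (forall v, padic_int_ring (iO v)) ->
  noetherian A ->
  banach_tate N w iota ->
  is_character kappa ->
  char_continuous p N kappa ->
  exists N' : A -> Rdefinitions.R,
    [/\ banach_tate N' w iota,
        (exists s : Rdefinitions.R, 0 < s /\ bounded_equiv (fun r => N r `^ s) N'),
        (forall t, in_T0 t -> N' (kappa t) <= 1)
      & (forall t, in_Teps p t -> N' (kappa t - 1) < 1)].
Proof.
move=> pr Hpad _ [HN Hcomp Hw Hcontr] Hchar Hcont.
have p_gt0 : (0 < p)%N := prime_gt0 pr.
have Hc : forall v, {kk : nat & {e : 'I_kk -> O v & {co : O v -> 'I_kk -> Zpadic p |
    forall a, a = \sum_(j < kk) iO v (co a j) * e j}}}.
  move=> v; have H1 := proj1 (Hpad v).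
  have [kk H2] := cid H1; have [e H3] := cid H2.
  have H4 : forall a : O v, exists c : 'I_kk -> Zpadic p, a = \sum_(j < kk) iO v (c j) * e j.
    by move=> a; case: (H3 a) => c [Hc _]; exists c.
  have [co Hco] := choice H4.
  by exists kk, e, co.
pose kk v := projT1 (Hc v).
pose eb v : 'I_(kk v) -> O v := projT1 (projT2 (Hc v)).
pose co v : O v -> 'I_(kk v) -> Zpadic p := proj1_sig (projT2 (projT2 (Hc v))).
have Hco : forall v a, a = \sum_(j < kk v) iO v (co v a j) * eb v j.
  by move=> v a; exact: (proj2_sig (projT2 (projT2 (Hc v))) a).
have [n Hn] : exists n, forall t, in_T0 t ->
    (forall v i, in_ppow p n (t v i - 1)) -> N (kappa t - 1) < 1 / 2.
  have h2 : 0 < 1 / 2 :> Rdefinitions.R by lra.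
  have [n Hn] := Hcont tone in_T0_one (1 / 2) h2.
  by exists n => t Ht H; have := Hn t Ht H; rewrite (kappa_one Hchar).
pose sg := sigf p m O d kk co n.
pose Sig := {ffun Sidx m d kk -> 'I_(p ^ n).+1}.
have Hsg : forall t t', sg t = sg t' -> forall v i, in_ppow p n (t v i - t' v i).
  exact: (@sigf_eq p m O iO d p_gt0 kk eb co Hco n).
have H0 : forall g : Sig, exists r : torus_pts O d, in_T0 r /\
    ((exists t, in_T0 t /\ sg t = g) -> sg r = g).
  move=> g; case: (pselect (exists t, in_T0 t /\ sg t = g)).
    by move=> [t [Ht Hg]]; exists t; split => // _.
  by move=> nH; exists tone; split; [exact: in_T0_one|move=> /nH].
have [rep0 Hrep0] := choice H0.
have H1 : forall g : Sig, exists r : torus_pts O d, in_Teps p r /\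
    ((exists t, in_Teps p t /\ sg t = g) -> sg r = g).
  move=> g; case: (pselect (exists t, in_Teps p t /\ sg t = g)).
    by move=> [t [Ht Hg]]; exists t; split => // _.
  move=> nH; exists tone; split; last by move=> /nH.
  split; first exact: in_T0_one.
  by move=> v i; rewrite subrr; exists 0; rewrite mulr0.
have [rep1 Hrep1] := choice H1.
pose K := fun a : A => exists t, in_T0 t /\ a = kappa t.
pose B := 1 + \sum_(g : Sig) N (kappa (rep0 g)).
have K1 : K 1 by exists tone; split; [exact: in_T0_one|rewrite (kappa_one Hchar)].
have KM : forall a b, K a -> K b -> K (a * b).
  move=> a b [t [Ht ->]] [t' [Ht' ->]]; exists (tmul t t'); split.
    exact: in_T0_mul.
  by rewrite (proj2 Hchar).
have Hsmall : forall r t, in_T0 r -> in_T0 t -> sg r = sg t ->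
    N (kappa (tmul (tinv r) t) - 1) < 1 / 2.
  move=> r t Hr Ht E; apply: Hn; first by apply: in_T0_mul => //; apply: in_T0_inv.
  move=> v i; apply: (inv_ppow p n r t v i Hr); apply: Hsg; exact: esym.
have KB : forall a, K a -> N a <= B.
  move=> a [t [Ht ->]].
  have [Hr Er] := Hrep0 (sg t); set r := rep0 (sg t) in Hr Er.
  have Er' : sg r = sg t by apply: Er; exists t.
  rewrite (kappa_split Hchar r t Hr Ht).
  apply: le_trans (N_mul HN _ _) _.
  have Hs : N (kappa (tmul (tinv r) t)) <= 1.
    rewrite -[kappa _](subrK 1); apply: (N_add_le HN); last by rewrite (N1 HN).
    by apply: ltW; apply: lt_le_trans (Hsmall r t Hr Ht Er') _; lra.
  apply: le_trans (_ : N (kappa r) * 1 <= _).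
    by apply: ler_wpM2l => //; apply: N_ge0.
  rewrite mulr1 /B (bigD1 (sg t)) //= addrCA.
  apply: ler_wpDr; first by apply: addr_ge0 => //; apply: sumr_ge0 => g _; apply: N_ge0.
  done.
have Hnat : forall k : nat, Op N K (k%:R) 1.
  move=> k; apply: (Op_le HN K1 KB) (Op_N HN K1 KB _).
  have := Hcontr 0 (k%:R) (@zp_in_pow0 p _).
  by rewrite rmorph_nat expr0 invr1.
have p2 : (2 <= p)%N by apply: prime_gt1.
have Hp : Op N K (p%:R) (1 / 2).
  apply: (Op_le HN K1 KB) (Op_N HN K1 KB _).
  have := Hcontr 1 (p%:R) (zp_in_pow_p p).
  rewrite rmorph_nat expr1 => h; apply: le_trans h _.
  have p2R : 2 <= p%:R :> Rdefinitions.R by rewrite (ler_nat _ 2 p).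
  rewrite mul1r lef_pV2 ?posrE //; lra.
have Hx : forall t, in_Teps p t -> Op N K (kappa t - 1) 1.
  move=> t [Ht _]; apply: (Op_sub HN K1 KB); first by apply: (Op_K HN K1 KM KB); exists t.
  exact: (Op1 HN K1 KM KB).
have Hhalf : forall s, in_T0 s -> N (kappa s - 1) < 1 / 2 -> Op N K (kappa s - 1) (1 / 2).
  by move=> s Hs h; apply: (Op_le HN K1 KB) (Op_N HN K1 KB _); apply: ltW.
pose M := (p ^ n)%N.
pose f := fun g : Sig => kappa (rep1 g) - 1.
have Hf : forall g, Op N K (f g) 1 by move=> g; apply: Hx; exact: (proj1 (Hrep1 g)).
have HM : forall g, Op N K (f g ^+ M) (1 / 2).
  move=> g; have [[Hr Hr1] _] := Hrep1 g; set r := rep1 g in Hr Hr1 *.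
  have [q [Hq E]] := frob HN K1 KM KB pr Hnat n (Hf g).
  have -> : f g ^+ M = (kappa (tpow r M) - 1) - p%:R * q.
    rewrite (kappa_pow Hchar r M Hr); move: E; rewrite /f /M addrC subrK => ->.
    by ring.
  apply: (Op_sub HN K1 KB).
    apply: Hhalf; first exact: in_T0_pow.
    apply: Hn; first exact: in_T0_pow.
    move=> v i; apply: (@in_ppow_le _ p n n.+1) => //.
    apply: in_ppow_iter; apply: (@in_ppow_le _ p 1 (eps_p p)); last exact: Hr1.
    by rewrite /eps_p; case: (p == 2%N).
  have -> : 1 / 2 = 1 / 2 * 1 :> Rdefinitions.R by rewrite mulr1.
  by apply: Op_mul => //; lra.
have He : forall t, in_Teps p t -> Op N K (kappa t - 1 - f (sg t)) (1 / 2).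
  move=> t [Ht Ht1]; have [[Hr _] Er] := Hrep1 (sg t); set r := rep1 (sg t) in Hr Er *.
  have Er' : sg r = sg t by apply: Er; exists t.
  have -> : kappa t - 1 - f (sg t) = kappa r * (kappa (tmul (tinv r) t) - 1).
    by rewrite /f -/r (kappa_split Hchar r t Hr Ht); ring.
  have -> : 1 / 2 = 1 * (1 / 2) :> Rdefinitions.R by lra.
  apply: Op_mul => //; first by apply: (Op_K HN K1 KM KB); exists r.
  apply: Hhalf; first by apply: in_T0_mul => //; apply: in_T0_inv.
  exact: Hsmall.
pose x := fun t : torus_pts O d => kappa t - 1.
pose L0 := (#|{: Sig}| * M)%N.
pose Pe := fun t : torus_pts O d => in_Teps p t.
have L0_gt0 : (0 < L0)%N.
  rewrite /L0 muln_gt0 expn_gt0 p_gt0 andbT.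
  by apply/card_gt0P; exists (sg tone).
have HL0 : forall s, List.Forall Pe s -> size s = L0 ->
    Op N K (\prod_(t <- s) x t) (1 / 2).
  move=> s Hs Es.
  apply: (Op_prod_bound HN K1 KM KB (P := Pe) (f := f) (gs := sg) (M := M));
    [by apply/andP; split; lra | exact: Hf | exact: HM | exact: He | exact: Hs
    | by rewrite Es | by rewrite Es].
pose c : Rdefinitions.R := 1 - (2 * L0%:R)^-1.
have L0R : 1 <= L0%:R :> Rdefinitions.R by rewrite (ler_nat _ 1).
have c0 : 0 < c.
  rewrite /c subr_gt0 invf_lt1; last by nra.
  by nra.
have c1 : c < 1 by rewrite /c gtrDl oppr_lt0 invr_gt0; nra.
have cL0 : 1 / 2 <= c ^+ L0.
  have ha : 0 <= (2 * L0%:R : Rdefinitions.R)^-1 <= 1.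
    apply/andP; split; first by rewrite invr_ge0; nra.
    by rewrite invf_le1; nra.
  apply: le_trans _ (bernoulli _ L0 ha).
  rewrite invfM mulrCA divff ?mulr1; first by lra.
  by apply: lt0r_neq0; lra.
have Hprod : forall s, List.Forall Pe s ->
    Op N K (\prod_(t <- s) x t) (c ^+ size s / c ^+ L0).
  apply: (Op_chunks HN K1 KM KB) => //; first exact: ltW.
  by move=> s Hs Es; apply: (Op_le HN K1 KB) cL0 _; apply: HL0.
have N31 := N3_1_gt0 HN K1 KB c0 Hprod.
have HNle : forall y, N y <= N3 N K Pe x c 1 * Nf N K Pe x c y.
  move=> y; rewrite -ler_pdivrMl //; rewrite mulrC; exact: (Nf_geN HN K1 KB c0 Hprod).
have w0 : w != 0.
  by case: Hw => wu _ _; apply/eqP => w0; rewrite w0 unitr0 in wu.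
have Nw0 : 0 < N w by apply: N_gt0.
exists (Nf N K Pe x c); split.
- split.
  + split.
    * exact: (Nf_ge0 HN K1 KB c0 Hprod).
    * move=> a; split; first exact: (Nf_eq0 HN K1 KB c0 Hprod).
      by move=> ->; exact: (Nf0 HN K1 KB c0 Hprod).
    * exact: (Nf_add HN K1 KB c0 Hprod).
    * split; [exact: (Nf_opp HN K1 KB c0 Hprod)|exact: (Nf_mul HN K1 KB c0 Hprod)].
    * exact: (Nf1 HN K1 KB c0 Hprod).
  + move=> u Hu.
    have Hu' : forall e : Rdefinitions.R, 0 < e -> exists M0 : nat, forall m0 n0 : nat,
        (M0 <= m0)%N -> (M0 <= n0)%N -> N (u m0 - u n0) < e.
      move=> e e0; have [M0 HM0] := Hu (e / N3 N K Pe x c 1) (divr_gt0 e0 N31).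
      exists M0 => m0 n0 h1 h2; apply: le_lt_trans (HNle _) _.
      by rewrite -ltr_pdivlMl // mulrC; apply: HM0.
    have [l Hl] := Hcomp u Hu'; exists l => e e0.
    have [M0 HM0] := Hl e e0; exists M0 => n0 h.
    exact: le_lt_trans (Nf_leN HN K1 KB c0 Hprod _) (HM0 n0 h).
  + case: Hw => wu wlt wmul.
    have Hs : forall a, Nf N K Pe x c (w * a) = N w * Nf N K Pe x c a.
      by move=> a; apply: (Nf_scale HN K1 KB c0 Hprod).
    have Ew : Nf N K Pe x c w = N w by rewrite -[w in LHS]mulr1 Hs (Nf1 HN K1 KB c0 Hprod) mulr1.
    split => //; first by rewrite Ew.
    by move=> a; rewrite Hs Ew.
  + move=> k z Hz; apply: le_trans (Nf_leN HN K1 KB c0 Hprod _) _; exact: Hcontr.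
- exists 1; split; first exact: ltr01.
  exists (N3 N K Pe x c 1)^-1, 1; split; [by rewrite invr_gt0|exact: ltr01|].
  move=> r; rewrite powRr1; last exact: N_ge0.
  rewrite mul1r (Nf_leN HN K1 KB c0 Hprod) andbT mulrC.
  exact: (Nf_geN HN K1 KB c0 Hprod).
- move=> t Ht; apply: (Nf_Op HN K1 KB c0 Hprod); first exact: ler01.
  by apply: (Op_K HN K1 KM KB); exists t.
- move=> t Ht; apply: le_lt_trans c1.
  exact: (Nf_x HN K1 KB c0 Hprod (i := t)).
Qed.
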